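(* The class of data languages accepted by SAFA is not closed under inverse homomorphism: there exist a data language $L\subseteq(\Sigma\times D)^*$ accepted by some SAFA and a homomorphism $h:(\Sigma\times D)^*\to(\Sigma\times D)^*$ such that no SAFA accepts $h^{-1}(L)=\{w: h(w)\in L\}$.
   Context: $D$ is a fixed countably infinite set of data values; for a finite alphabet $\Sigma$, data words are elements of $(\Sigma\times D)^*$. A homomorphism of data words is a monoid homomorphism $h:(\Sigma\times D)^*\to(\Sigma\times D)^*$ ($h(\varepsilon)=\varepsilon$, $h(uv)=h(u)h(v)$), determined by the images of single letters (which may be the empty word). A set augmented finite automaton (SAFA) is a tuple $M=(Q,\Sigma\times D,q_0,F,H,\delta)$: $Q$ finite set of states, $q_0\in Q$ initial, $F\subseteq Q$ final, $H=\{h_1,\dots,h_m\}$ a finite collection of (names of) sets of data values, $\delta\subseteq Q\times\Sigma\times C\times OP\times Q$ with $C=\{p(h_i),\,!p(h_i)\}$, $OP=\{-\}\cup\{\mathsf{ins}(h_i)\}$. Configurations are $(q,\langle S_1,\dots,S_m\rangle)$ with $S_i\subseteq D$ finite; initially state $q_0$ and all sets are empty. On reading $(a,d)$, a transition $(q,a,\alpha,op,q')$ from the current state may be taken if $\alpha=p(h_i)$ and $d\in S_i$, or $\alpha=\,!p(h_i)$ and $d\notin S_i$; then the state becomes $q'$ and if $op=\mathsf{ins}(h_j)$ the value $d$ is added to $S_j$ ($op=-$ changes nothing). A word is accepted if some run reads it entirely and ends in $F$. *)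

(* Defs.v *)
From mathcomp Require Import all_boot.
From Stdlib Require List.
Set Implicit Arguments. Unset Strict Implicit. Unset Printing Implicit Defensive.

Definition D := nat.

Definition dword (Sigma : finType) := seq (Sigma * D).

Definition is_dword_hom (Sigma : finType) (h : dword Sigma -> dword Sigma) : Prop :=
  h [::] = [::] /\ forall u v, h (u ++ v) = h u ++ h v.

(* Conditions p(h_i) / !p(h_i) and operations - / ins(h_j), for m sets. *)
Inductive cond (m : nat) := CIn of 'I_m | CNotIn of 'I_m.
Inductive op (m : nat) := ONop | OIns of 'I_m.

Record SAFA (Sigma : finType) := {
  safa_Q : finType;
  safa_m : nat;
  safa_q0 : safa_Q;
  safa_F : pred safa_Q;
  safa_delta : seq (safa_Q * Sigma * cond safa_m * op safa_m * safa_Q)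
}.

(* Contents of the m sets (always finite, since they start empty and grow by insertions). *)
Definition sets (m : nat) := 'I_m -> D -> bool.

Definition sets0 (m : nat) : sets m := fun _ _ => false.

Definition cond_holds (m : nat) (c : cond m) (S : sets m) (d : D) : bool :=
  match c with
  | CIn i => S i d
  | CNotIn i => ~~ S i d
  end.

Definition apply_op (m : nat) (o : op m) (d : D) (S : sets m) : sets m :=
  match o with
  | ONop => S
  | OIns j => fun i x => ((i == j) && (x == d)) || S i x
  end.

Fixpoint accepts_from (Sigma : finType) (M : SAFA Sigma)
    (q : safa_Q M) (S : sets (safa_m M)) (w : dword Sigma) : Prop :=
  match w with
  | [::] => @safa_F Sigma M q
  | (a, d) :: w' =>
      exists (c : cond (safa_m M)) (o : op (safa_m M)) (q' : safa_Q M),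
        Stdlib.Lists.List.In (q, a, c, o, q') (safa_delta M) /\
        cond_holds c S d /\
        @accepts_from Sigma M q' (apply_op o d S) w'
  end.

Definition safa_accepts (Sigma : finType) (M : SAFA Sigma) (w : dword Sigma) : Prop :=
  @accepts_from Sigma M (safa_q0 M) (@sets0 (safa_m M)) w.

(* Main.v *)
Require Import Defs.
From mathcomp Require Import all_boot.

Section Inv.
Variable Sigma : finType.
Variable M : SAFA Sigma.
Variable f : D -> D.
Hypothesis finj : injective f.

Definition rel (S S' : sets (safa_m M)) := forall i d, S' i (f d) = S i d.

Lemma inv_acc w : forall q S S', rel S S' -> @accepts_from _ M q S w ->
  @accepts_from _ M q S' (map (fun p => (p.1, f p.2)) w).
Proof.
elim: w => [|[a d] w IH] q S S' HR //=.
move=> [c [o [q' [Hin [Hc Hw]]]]].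
exists c, o, q'; split => //; split.
  by case: c Hc {Hin} => i /=; rewrite HR.
apply: (IH _ (apply_op o d S)) => //.
case: o {Hin Hw} => [|j] i x /=; rewrite HR //.
by rewrite (inj_eq finj).
Qed.
End Inv.

Definition Q3 := 'I_3.
Definition q0 : Q3 := ord0.
Definition q1 : Q3 := Ordinal (isT : 1 < 3).
Definition q2 : Q3 := Ordinal (isT : 2 < 3).

Definition M0 : SAFA unit := {|
  safa_Q := Q3; safa_m := 1; safa_q0 := q0; safa_F := fun q => q == q2;
  safa_delta := [:: (q0, tt, CNotIn ord0, OIns ord0, q1);
                    (q1, tt, CIn ord0, ONop 1, q2)]
|}.

Definition L0 (w : dword unit) : Prop := exists x, w = [:: (tt, x); (tt, x)].

Lemma M0_ok w : safa_accepts M0 w <-> L0 w.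
Proof.
split.
- case: w => [|[[] d] w] //=.
  move=> [c [o [q' [Hin [Hc Hw]]]]].
  case: Hin => [E|[E|[]]]; case: E => *; subst => //.
  case: w Hw => [|[[] d'] w] //=.
  move=> [c [o [q'' [Hin [Hc' Hw]]]]].
  case: Hin => [E|[E|[]]]; case: E => *; subst => //.
  case: w Hw => [|[[] d''] w] //=.
  + move=> _; move: Hc'; rewrite /= /sets0 orbF => /eqP ->; by exists d.
  + move=> [c [o [q''' [Hin _]]]].
    by case: Hin => [E|[E|[]]]; case: E => *; subst.
- move=> [x ->] /=.
  exists (CNotIn ord0), (OIns ord0), q1; split; first by left.
  split => //.
  exists (CIn ord0), (ONop 1), q2; split; first by right; left.
  by rewrite /= eqxx.
Qed.

Definition h0 (w : dword unit) : dword unit := map (fun p => (p.1, p.2./2)) w.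

Theorem theorem10 :
  exists (Sigma : finType) (L : dword Sigma -> Prop) (h : dword Sigma -> dword Sigma),
    (exists M : SAFA Sigma, forall w, safa_accepts M w <-> L w) /\
    is_dword_hom h /\
    ~ (exists M' : SAFA Sigma, forall w, safa_accepts M' w <-> L (h w)).
Proof.
exists unit, L0, h0; split; first by exists M0; exact: M0_ok.
split; first by split => // u v; rewrite /h0 map_cat.
move=> [M' HM'].
have H1 : safa_accepts M' [:: (tt, 0); (tt, 1)] by apply/HM'; exists 0.
have := @inv_acc _ M' S (@succn_inj) _ _ (@sets0 _) (@sets0 _) (fun _ _ => erefl) H1.
move/HM' => [x] /= [E1 E2].
by rewrite -E1 in E2.
Qed.
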